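(* For every $x\in\mathbb{R}^n$, $$\|Px\|_q^2\le\|x\|_q^2-\tfrac12D,\qquad\text{where }D=\sum_{i=1}^n\max_{j:\,m_{ij}>0}(x_i-x_j)^2.$$
   Context: Let $M=(m_{ij})$ be a symmetric $n\times n$ nonnegative matrix whose nonzero entries are all at least $1$ and whose diagonal entries are positive. Let $q=M\mathbf 1$ and $P=\mathrm{diag}(q)^{-1}M$. Define $\langle x,y\rangle_q=\sum_iq_ix_iy_i$ and $\|x\|_q^2=\langle x,x\rangle_q$. *)

(* Defs.v *)
From mathcomp Require Import all_boot all_order all_algebra.
Set Implicit Arguments. Unset Strict Implicit. Unset Printing Implicit Defensive.
Import Order.TTheory GRing.Theory Num.Theory.
Local Open Scope ring_scope.

Definition qvec (R : realFieldType) (n : nat) (M : 'M[R]_n) : 'cV[R]_n :=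
  M *m const_mx 1.

Definition Pmat (R : realFieldType) (n : nat) (M : 'M[R]_n) : 'M[R]_n :=
  \matrix_(i, j) ((qvec M i 0)^-1 * M i j).

Definition qdot (R : realFieldType) (n : nat) (q x y : 'cV[R]_n) : R :=
  \sum_(i < n) q i 0 * x i 0 * y i 0.

Definition qnorm2 (R : realFieldType) (n : nat) (q x : 'cV[R]_n) : R :=
  qdot q x x.

(* D = sum_i max_{j : m_ij > 0} (x_i - x_j)^2  (the max is over a nonempty
   set of nonnegative reals when the diagonal is positive, so using 0 as the
   neutral element of max is harmless) *)
Definition Dterm (R : realFieldType) (n : nat) (M : 'M[R]_n) (x : 'cV[R]_n) : R :=
  \sum_(i < n) \big[Num.max/0]_(j < n | 0 < M i j) (x i 0 - x j 0) ^+ 2.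

(* Main.v *)
Require Import Defs.
From mathcomp Require Import all_boot all_order all_algebra.
From mathcomp Require Import ring lra.
Import Order.TTheory GRing.Theory Num.Theory.
Local Open Scope ring_scope.

Theorem lemma5 (R : realFieldType) (n : nat) (M : 'M[R]_n)
  (Msym : M^T = M)
  (Mnonneg : forall i j, 0 <= M i j)
  (Mge1 : forall i j, M i j != 0 -> 1 <= M i j)
  (Mdiag : forall i, 0 < M i i)
  (x : 'cV[R]_n) :
  qnorm2 (qvec M) (Pmat M *m x) <= qnorm2 (qvec M) x - Dterm M x / 2.
Proof.
have qE : forall i, qvec M i 0 = \sum_j M i j.
  by move=> i; rewrite /qvec mxE; apply eq_bigr => j _; rewrite mxE mulr1.
have qpos : forall i, 0 < qvec M i 0.
  move=> i; rewrite qE (bigD1 i) //=; apply: (lt_le_trans (Mdiag i)).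
  by rewrite lerDl; apply sumr_ge0 => *; exact: Mnonneg.
have yE0 : forall i, (Pmat M *m x) i 0 = (qvec M i 0)^-1 * \sum_j M i j * x j 0.
  move=> i; rewrite [LHS]mxE mulr_sumr; apply eq_bigr => j _.
  by rewrite /Pmat [in LHS]mxE mulrA.
have yE : forall i, qvec M i 0 * (Pmat M *m x) i 0 = \sum_j M i j * x j 0.
  by move=> i; rewrite yE0 mulVKf //; exact: lt0r_neq0.
set q := qvec M in qE qpos yE *.
set y := Pmat M *m x in yE *.
have key : forall i, \sum_j M i j * (x j 0 - y i 0)^+2
    = \sum_j M i j * x j 0 ^+ 2 - q i 0 * y i 0 ^+ 2.
  move=> i.
  transitivity (\sum_j (M i j * x j 0 ^+2 - (2 * y i 0) * (M i j * x j 0)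
                        + y i 0 ^+ 2 * M i j)).
    by apply eq_bigr => j _; ring.
  rewrite big_split sumrB /= -!mulr_sumr -yE -qE; ring.
have sym : forall i j, M j i = M i j by move=> i j; rewrite -[in LHS]Msym mxE.
have total : \sum_i \sum_j M i j * x j 0 ^+2 = qnorm2 q x.
  rewrite exchange_big /qnorm2 /qdot; apply eq_bigr => j _.
  rewrite qE -mulrA -expr2 mulr_suml; apply eq_bigr => i _; by rewrite (sym j i).
have lhs : qnorm2 q y = \sum_i q i 0 * y i 0 ^+ 2.
  by rewrite /qnorm2 /qdot; apply eq_bigr => i _; rewrite expr2 mulrA.
have perI : forall i, \big[Num.max/0]_(j < n | 0 < M i j) (x i 0 - x j 0) ^+ 2
    <= 2 * \sum_j M i j * (x j 0 - y i 0)^+2.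
  move=> i; set T := \sum_j _.
  have T0 : 0 <= T by apply sumr_ge0 => j _; apply mulr_ge0 => //; apply sqr_ge0.
  apply: (big_ind (fun m => m <= 2 * T)).
  - by apply mulr_ge0.
  - by move=> a b ha hb; rewrite ge_max ha hb.
  move=> j Mj; case: (eqVneq j i) => [->|nji].
    by rewrite subrr expr0n /= mulr_ge0.
  have hs : M i i * (x i 0 - y i 0)^+2 + M i j * (x j 0 - y i 0)^+2 <= T.
    rewrite /T (bigD1 i) //= (bigD1 j nji) /= addrA lerDl.
    by apply sumr_ge0 => k _; apply mulr_ge0 => //; apply sqr_ge0.
  have h1 : (x i 0 - y i 0)^+2 <= M i i * (x i 0 - y i 0)^+2.
    by apply: ler_peMl; [apply sqr_ge0 | apply Mge1; exact: lt0r_neq0].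
  have h2 : (x j 0 - y i 0)^+2 <= M i j * (x j 0 - y i 0)^+2.
    by apply: ler_peMl; [apply sqr_ge0 | apply Mge1; exact: lt0r_neq0].
  have h3 : (x i 0 - x j 0)^+2 <= 2 * ((x i 0 - y i 0)^+2 + (x j 0 - y i 0)^+2).
    have := sqr_ge0 (x i 0 + x j 0 - 2 * y i 0); nra.
  lra.
have split : \sum_i \sum_j M i j * x j 0 ^+2
    = \sum_i q i 0 * y i 0 ^+ 2 + \sum_i \sum_j M i j * (x j 0 - y i 0)^+2.
  by rewrite -big_split; apply eq_bigr => i _; rewrite key [RHS]addrC subrK.
have hD : Dterm M x <= 2 * \sum_i \sum_j M i j * (x j 0 - y i 0)^+2.
  by rewrite /Dterm mulr_sumr; apply ler_sum => i _; exact: perI.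
rewrite lhs -total split; lra.
Qed.
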